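(* Let $S\in\mathbb{Z}_{\ge 0}^{n\times n_s}$ and $T\in\mathbb{Z}_{\ge0}^{n\times n_t}$, and let $\mathcal{C}=\{M\in\mathbb{Z}_{\ge0}^{n_s\times n_t} : SM=T\}$, assumed nonempty. Let $\mathcal{F}=\{x\in\mathbb{Z}_{\ge0}^{1\times n_s} : |\{xM : M\in\mathcal{C}\}|=1\}$. Let $x$ be any input (row vector in $\mathbb{Z}_{\ge0}^{1\times n_s}$), let $v\sim\mathcal{N}(0,I_{n_t\times n_t})$ be a random vector, and let $a=\min_{M\in\mathcal{C}} xMv$ and $b=\max_{M\in\mathcal{C}} xMv$. Then with probability 1, $a=b$ if and only if $x\in\mathcal{F}$.
   Context: Each training input (a bag of source atoms over $n_s$ atom types) is encoded as a row vector of counts, forming the rows of $S$; the corresponding outputs (bags over $n_t$ target atom types) form the rows of $T$. A mapping is a nonnegative integer matrix $M$ whose entry $M_{st}$ is the number of copies of target atom $t$ that source atom $s$ maps to; the output on input $x$ is $xM$. Nonemptiness of $\mathcal{C}$ reflects the standing assumption that the training data are noiseless outputs of a true mapping $M^*$. *)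

(* Defs.v *)
From HB Require Import structures.
From mathcomp Require Import all_boot all_order all_algebra.
From mathcomp Require Import all_classical all_reals all_analysis.
Set Implicit Arguments. Unset Strict Implicit. Unset Printing Implicit Defensive.
Import Order.TTheory GRing.Theory Num.Theory.
Local Open Scope classical_set_scope.
Local Open Scope ring_scope.

Definition consistent (n ns nt : nat) (S : 'M[nat]_(n, ns)) (T : 'M[nat]_(n, nt))
  : set 'M[nat]_(ns, nt) := [set M | S *m M = T].

Definition determined (n ns nt : nat) (S : 'M[nat]_(n, ns)) (T : 'M[nat]_(n, nt))
  : set 'rV[nat]_ns :=
  [set x | exists y : 'rV[nat]_nt, [set x *m M | M in consistent S T] = [set y]].

Definition score (R : realType) (ns nt : nat) (x : 'rV[nat]_ns)
  (M : 'M[nat]_(ns, nt)) (v : 'I_nt -> R) : R :=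
  \sum_(j < nt) ((x *m M) ord0 j)%:R * v j.

(* a = min_{M in C} x M v, b = max_{M in C} x M v, taken as inf/sup in the
   extended reals (they coincide with min/max whenever these exist). *)
Definition score_min (R : realType) (n ns nt : nat) (S : 'M[nat]_(n, ns))
  (T : 'M[nat]_(n, nt)) (x : 'rV[nat]_ns) (v : 'I_nt -> R) : \bar R :=
  ereal_inf [set (score x M v)%:E | M in consistent S T].

Definition score_max (R : realType) (n ns nt : nat) (S : 'M[nat]_(n, ns))
  (T : 'M[nat]_(n, nt)) (x : 'rV[nat]_ns) (v : 'I_nt -> R) : \bar R :=
  ereal_sup [set (score x M v)%:E | M in consistent S T].

Definition mutually_independent (d : measure_display) (Omega : measurableType d)
  (R : realType) (P : probability Omega R) (k : nat)
  (X : 'I_k -> {RV P >-> R}) : Prop :=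
  forall B : 'I_k -> set R, (forall i, measurable (B i)) ->
    P (\bigcap_(i in [set: 'I_k]) (X i @^-1` B i)) =
    (\prod_(i < k) P (X i @^-1` B i))%E.

(* Main.v *)
Require Import Defs.
From HB Require Import structures.
From mathcomp Require Import all_boot all_order all_algebra.
From mathcomp Require Import all_classical all_reals all_analysis.
From mathcomp Require Import measurable_realfun.
Import Order.TTheory GRing.Theory Num.Theory.
Local Open Scope classical_set_scope.
Local Open Scope ring_scope.
Lemma fin_subadd (R : realType) d' (T : measurableType d') (mu : {measure set T -> \bar R})
  (I : finType) (p : pred I) (F : I -> set T) : (forall i, measurable (F i)) ->
  (mu (\big[setU/set0]_(i | p i) F i) <= \sum_(i | p i) mu (F i))%E.
Proof.
move=> mF.
have : measurable (\big[setU/set0]_(i | p i) F i) /\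
  (mu (\big[setU/set0]_(i | p i) F i) <= \sum_(i | p i) mu (F i))%E.
  apply: (big_ind2 (fun A s => measurable A /\ (mu A <= s)%E)).
  - by split; [exact: measurable0 | rewrite measure0].
  - move=> A1 s1 A2 s2 [mA1 h1] [mA2 h2]; split; first exact: measurableU.
    apply: le_trans (measureU2 _ mA1 mA2) _; exact: leeD.
  - by move=> i _; split.
by case.
Qed.

Lemma disj_big (T : Type) (I : eqType) (p : pred I) (F : I -> set T) i s :
  (forall j, j \in s -> p j -> F i `&` F j = set0) ->
  F i `&` \big[setU/set0]_(j <- s | p j) F j = set0.
Proof.
elim: s => [|j s IH] H; first by rewrite big_nil setI0.
rewrite big_cons; case: ifP => pj; last by apply: IH => k ks; apply: H; rewrite inE ks orbT.
rewrite setIUr (H j) ?inE ?eqxx // set0U; apply: IH => k ks; apply: H; rewrite inE ks orbT.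
all: by [].
Qed.

Lemma fin_disj_le1 (R : realType) d' (T : measurableType d') (P : probability T R)
  (I : finType) (p : pred I) (F : I -> set T) : (forall i, measurable (F i)) ->
  (forall i j, p i -> p j -> i != j -> F i `&` F j = set0) ->
  (\sum_(i | p i) P (F i) <= 1)%E.
Proof.
move=> mF dF.
have key : forall s, uniq s -> P (\big[setU/set0]_(i <- s | p i) F i) = (\sum_(i <- s | p i) P (F i))%E.
  elim=> [|i s IH] /=; first by rewrite !big_nil measure0.
  case/andP=> nis us; rewrite !big_cons; case: ifP => pi; last exact: IH.
  rewrite measureU //; first by congr (_ + _)%E; exact: IH.
  - exact: bigsetU_measurable.
  - apply: disj_big => j js pj; apply: dF => //.
    by apply/eqP => ij; rewrite ij js in nis.
rewrite -key ?index_enum_uniq //; apply: probability_le1.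
exact: bigsetU_measurable.
Qed.

From mathcomp Require Import ring lra.

Section Core.
Context (R : realType) (d : measure_display) (Omega : measurableType d)
  (P : probability Omega R) (nt : nat) (g : 'I_nt -> {RV P >-> R}).
Hypothesis Hnormal : forall j A, measurable A -> distribution P (g j) A = normal_prob 0 1 A.
Hypothesis Hindep : mutually_independent g.

Lemma prob_itv j (a b : R) : a <= b ->
  (P (g j @^-1` [set` `[a, b]]) <= ((normal_peak (1:R)) * (b - a))%:E)%E.
Proof.
move=> ab; rewrite -[P _]/(distribution P (g j) _) Hnormal //.
rewrite /normal_prob.
apply: (@le_trans _ _ (\int[lebesgue_measure]_(x in [set` `[a,b]]) (normal_peak (1:R))%:E)%E).
  apply: ge0_le_integral => //=.
  - by move=> x _; rewrite lee_fin normal_pdf_ge0.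
  - apply/measurable_EFinP; apply: measurable_funTS => /=; exact: measurable_normal_pdf.
  - by move=> x _; rewrite lee_fin; apply: normal_pdf_ub; exact: oner_neq0.
rewrite integral_cst //= lebesgue_measure_itv /=.
case: ltP => ab'.
  by rewrite -EFinD -EFinM.
by rewrite mule0 lee_fin mulr_ge0 ?normal_peak_ge0 ?subr_ge0.
Qed.

Variables (c : 'I_nt -> R) (j0 : 'I_nt).
Hypothesis cj0 : c j0 != 0.
Let b j := if j == j0 then 0 else c j / c j0.
Let Ec := [set w | \sum_j c j * g j w = 0].
Let BK (K : nat) := \bigcap_(j in [set: 'I_nt]) (g j @^-1` [set` `[- K%:R, K%:R]]).

Lemma Ec_eq w : Ec w -> g j0 w = - \sum_j b j * g j w.
Proof.
rewrite /Ec /= (bigD1 j0) //= => H.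
have -> : \sum_j b j * g j w = (\sum_(j | j != j0) c j * g j w) / c j0.
  rewrite (bigD1 j0) //= /b eqxx mul0r add0r mulr_suml; apply: eq_bigr => j /negbTE ->.
  by rewrite mulrAC.
have -> : \sum_(j | j != j0) c j * g j w = - (c j0 * g j0 w).
  by apply/eqP; rewrite -addr_eq0 addrC H.
by rewrite mulNr opprK mulrC mulKf.
Qed.

Lemma Ec_meas : measurable Ec.
Proof.
have m : measurable_fun setT (fun w => \sum_j c j * g j w).
  apply: measurable_sum => j; apply: measurable_funM; first exact: measurable_cst.
  exact: measurable_funPT.
by rewrite -[Ec]setTI; exact: (m measurableT [set 0] (measurable_set1 0)).
Qed.

Lemma BK_meas K : measurable (BK K).
Proof.
apply: fin_bigcap_measurable; first exact: finite_finset.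
by move=> j _; apply: measurable_funPTI; exact: measurable_itv.
Qed.


Section Grid.
Variables (K : nat) (δ : R).
Hypothesis hδ : 0 < δ.
Let N := (Num.truncn (K%:R / δ)).+1.
Let lo (t : nat) : R := (t%:R - N%:R) * δ.
Let L := \sum_j `|b j|.
Let Y (k : {ffun 'I_nt -> 'I_(N.*2).+1}) := - \sum_j b j * lo (k j).
Let Iv (t : nat) : set R := [set` `[lo t, lo t + δ[ ].
Let Bs (k : {ffun 'I_nt -> 'I_(N.*2).+1}) j :=
  if j == j0 then [set` `[Y k - L * δ, Y k + L * δ]] else Iv (k j).
Let Cs (k : {ffun 'I_nt -> 'I_(N.*2).+1}) j :=
  if j == j0 then [set: R] else Iv (k j).
Let rect k := \bigcap_(j in [set: 'I_nt]) (g j @^-1` Bs k j).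
Let cell k := \bigcap_(j in [set: 'I_nt]) (g j @^-1` Cs k j).

Lemma L_ge0 : 0 <= L.
Proof. by apply: sumr_ge0 => j _; exact: normr_ge0. Qed.

Lemma Bs_meas k j : measurable (Bs k j).
Proof. by rewrite /Bs; case: ifP => _; exact: measurable_itv. Qed.

Lemma Cs_meas k j : measurable (Cs k j).
Proof. by rewrite /Cs; case: ifP => _; [exact: measurableT | exact: measurable_itv]. Qed.

Lemma rect_meas k : measurable (rect k).
Proof.
apply: fin_bigcap_measurable; first exact: finite_finset.
by move=> j _; apply: measurable_funPTI; exact: Bs_meas.
Qed.

Lemma cell_meas k : measurable (cell k).
Proof.
apply: fin_bigcap_measurable; first exact: finite_finset.
by move=> j _; apply: measurable_funPTI; exact: Cs_meas.
Qed.

Lemma rect_le k :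
  (P (rect k) <= (normal_peak (1:R) * (L * δ *+ 2))%:E * P (cell k))%E.
Proof.
rewrite /rect /cell (Hindep (Bs k) (Bs_meas k)) (Hindep (Cs k) (Cs_meas k)).
rewrite (bigD1 j0) //= [X in (_ <= _ * X)%E](bigD1 j0) //=.
rewrite /Bs /Cs eqxx preimage_setT probability_setT mul1e.
rewrite (eq_bigr (fun j => P (g j @^-1` Iv (k j)))); last by move=> j /negbTE ->.
rewrite [X in (_ <= _ * X)%E](eq_bigr (fun j => P (g j @^-1` Iv (k j)))); last by move=> j /negbTE ->.
apply: lee_wpmul2r; first by apply: prode_ge0 => j _; exact: measure_ge0.
have hL := L_ge0; have hLd : 0 <= L * δ by rewrite mulr_ge0 // ltW.
have -> : L * δ *+ 2 = (Y k + L * δ) - (Y k - L * δ) by rewrite mulr2n; lra.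
by apply: prob_itv; lra.
Qed.


Lemma cover : Ec `&` BK K `<=` \big[setU/set0]_(k : {ffun 'I_nt -> 'I_(N.*2).+1} | k j0 == ord0) rect k.
Proof.
move=> w [Ew Bw].
have gK j : - K%:R <= g j w <= K%:R by have := Bw j I; rewrite /= in_itv.
have KN : K%:R < N%:R * δ by rewrite -ltr_pdivrMr //; exact: truncnS_gt.
pose u j := g j w / δ.
have gu j : g j w = u j * δ by rewrite /u divfK // gt_eqF.
have u0 j : 0 <= u j + N%:R.
  have := gK j; rewrite gu => /andP[h1 _].
  by rewrite -(pmulr_lge0 _ hδ) mulrDl; lra.
pose t j := Num.truncn (u j + N%:R).
have tP j : (t j)%:R <= u j + N%:R < (t j)%:R + 1.
  by rewrite -mulrSr; apply: truncn_itv.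
have tlt j : (t j < N.*2.+1)%N.
  have := tP j => /andP[h1 _]; have := gK j; rewrite gu => /andP[_ h2].
  have uN : u j < N%:R by rewrite -(ltr_pM2r hδ); lra.
  have : (t j)%:R < (N + N)%:R :> R by rewrite natrD; lra.
  by rewrite ltr_nat addnn => h; exact: ltnW.
pose k : {ffun 'I_nt -> 'I_(N.*2).+1} := [ffun j => if j == j0 then ord0 else inord (t j)].
have kj j : j != j0 -> (k j : nat) = t j by move=> /negbTE h; rewrite ffunE h inordK.
have loP j : j != j0 -> lo (k j) <= g j w < lo (k j) + δ.
  move=> nj; rewrite kj // /lo gu; have := tP j => /andP[h1 h2]; apply/andP; split.
    by rewrite ler_pM2r //; lra.
  by rewrite -[X in _ < _ + X]mul1r -mulrDl ltr_pM2r //; lra.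
rewrite (bigD1 k) /=; last by rewrite ffunE eqxx.
left => j _; rewrite /Bs; case: eqP => [->|/eqP nj]; last first.
  by rewrite /= /Iv /= in_itv /=; exact: loP.
rewrite /= in_itv /= -ler_distl (Ec_eq _ Ew) /Y.
have -> : - \sum_j b j * g j w - - \sum_j b j * lo (k j) = \sum_j b j * (lo (k j) - g j w).
  by rewrite opprK addrC -sumrB; apply: eq_bigr => i _; rewrite mulrBr.
apply: le_trans (ler_norm_sum _ _ _) _.
rewrite /L mulr_suml; apply: ler_sum => i _; rewrite normrM.
case: (eqVneq i j0) => [->|ni]; first by rewrite /b eqxx normr0 !mul0r.
apply: ler_wpM2l; first exact: normr_ge0.
by have := loP i ni => /andP[h1 h2]; rewrite ler_norml; apply/andP; split; lra.
Qed.

Lemma cell_disj (k k' : {ffun 'I_nt -> 'I_(N.*2).+1}) : k j0 == ord0 -> k' j0 == ord0 -> k != k' ->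
  cell k `&` cell k' = set0.
Proof.
move=> h h' kk'.
have [j njj] : exists j, k j != k' j.
  apply/existsP; apply: contraNT kk' => /existsPn H; apply/eqP/ffunP => j.
  exact/eqP/negbNE/(H j).
have jj0 : j != j0 by apply: contraNneq njj => ->; rewrite (eqP h) (eqP h').
apply/seteqP; split => // w [C1 C2].
have := C1 j I; have := C2 j I; rewrite /Cs (negbTE jj0) /= /Iv /= !in_itv /= /lo.
move=> /andP[a1 a2] /andP[b1 b2].
move: njj; rewrite -(inj_eq val_inj) /= => njj.
case: (ltngtP (k j) (k' j)) => hlt; last by rewrite hlt eqxx in njj.
- have : (k j)%:R + 1 <= (k' j)%:R :> R by rewrite -mulrSr ler_nat.
  by move=> hh; exfalso; nra.
- have : (k' j)%:R + 1 <= (k j)%:R :> R by rewrite -mulrSr ler_nat.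
  by move=> hh; exfalso; nra.
Qed.

Lemma EB_le : (P (Ec `&` BK K) <= (normal_peak (1:R) * (L * δ *+ 2))%:E)%E.
Proof.
set D := (normal_peak 1 * (L * δ *+ 2))%:E.
have D0 : (0 <= D)%E.
  by rewrite lee_fin mulr_ge0 ?normal_peak_ge0 // mulrn_wge0 // mulr_ge0 ?L_ge0 ?ltW.
apply: (@le_trans _ _ (P (\big[setU/set0]_(k : {ffun 'I_nt -> 'I_(N.*2).+1} | k j0 == ord0) rect k))).
  apply: le_measure; rewrite ?inE.
  - exact: measurableI Ec_meas (BK_meas K).
  - by apply: bigsetU_measurable => k _; exact: rect_meas.
  - exact: cover.
apply: le_trans (@fin_subadd _ _ _ P _ _ _ rect_meas) _.
apply: (@le_trans _ _ (\sum_(k : {ffun 'I_nt -> 'I_(N.*2).+1} | k j0 == ord0) D * P (cell k))%E).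
  by apply: lee_sum => k _; exact: rect_le.
rewrite -ge0_sume_distrr; last by move=> k _; exact: measure_ge0.
rewrite -[X in (_ <= X)%E]mule1; apply: lee_wpmul2l => //.
apply: fin_disj_le1; first exact: cell_meas.
by move=> k k' hk hk' kk'; exact: cell_disj.
Qed.

End Grid.

Lemma EB_null K : P (Ec `&` BK K) = 0%E.
Proof.
apply/eqP; rewrite eq_le measure_ge0 andbT.
apply/lee_addgt0Pr => e e0; rewrite add0e.
set L := \sum_j `|b j|.
have L0 : 0 <= L by apply: sumr_ge0 => j _; exact: normr_ge0.
set C := normal_peak (1:R) * (L *+ 2).
have C0 : 0 <= C by rewrite mulr_ge0 ?normal_peak_ge0 // mulrn_wge0.
have hd : 0 < e / (C + 1) by rewrite divr_gt0 //; lra.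
apply: le_trans (EB_le K _ hd) _; rewrite lee_fin.
have -> : normal_peak (1:R) * (L * (e / (C + 1)) *+ 2) = C * e / (C + 1).
  by rewrite /C !mulr2n; ring.
rewrite ler_pdivrMr; last lra.
have pe : 0 <= C * e by rewrite mulr_ge0 // ltW.
lra.
Qed.

Lemma Ec_negligible : P.-negligible Ec.
Proof.
apply: (@negligibleS _ _ _ _ (\bigcup_K (Ec `&` BK K))).
  move=> w Ew; exists (Num.truncn (\sum_j `|g j w|)).+1 => //; split => // j _.
  rewrite /= in_itv /= -ler_norml.
  apply: le_trans (ltW (truncnS_gt _)).
  rewrite (bigD1 j) //= lerDl; apply: sumr_ge0 => i _; exact: normr_ge0.
apply: negligible_bigcup => K; apply/negligibleP; last exact: EB_null.
exact: measurableI Ec_meas (BK_meas K).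
Qed.

End Core.


Lemma set_const (U V : Type) (A : set U) (f : U -> V) a0 : A a0 ->
  (forall a, A a -> f a = f a0) -> [set f a | a in A] = [set f a0].
Proof.
move=> Aa0 H; apply/seteqP; split => [_ [a Aa <-]|_ ->]; first exact: H.
by exists a0.
Qed.

Theorem proposition2 (R : realType) (n ns nt : nat)
  (S : 'M[nat]_(n, ns)) (T : 'M[nat]_(n, nt))
  (HC : consistent S T !=set0)
  (x : 'rV[nat]_ns)
  (d : measure_display) (Omega : measurableType d) (P : probability Omega R)
  (g : 'I_nt -> {RV P >-> R})
  (Hnormal : forall j A, measurable A -> distribution P (g j) A = normal_prob 0 1 A)
  (Hindep : mutually_independent g) :
  {ae P, forall w : Omega,
     score_min S T x (fun j => g j w) = score_max S T x (fun j => g j w)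
     <-> determined S T x}.
Proof.
have [M0 CM0] := HC.
have [det|ndet] := pselect (determined S T x).
  apply: aeW => w; split => // _.
  have [y Hy] := det.
  have xy M : consistent S T M -> x *m M = y.
    move=> CM; have : [set x *m M | M in consistent S T] (x *m M) by exists M.
    by rewrite Hy.
  rewrite /score_min /score_max (@set_const _ _ _ _ M0) //.
    by rewrite ereal_inf1 ereal_sup1.
  by move=> M CM; rewrite /score (xy M CM) (xy M0 CM0).
have [M1 CM1 neq] : exists2 M1, consistent S T M1 & x *m M1 != x *m M0.
  apply: contrapT => H; apply: ndet; exists (x *m M0).
  apply: set_const => // M CM; apply/eqP; apply: contrapT => /negP nM.
  by apply: H; exists M.
have [j0 nj0] : exists j0, (x *m M1) ord0 j0 != (x *m M0) ord0 j0.
  apply: contrapT => H; move/negP: neq; apply; apply/eqP/matrixP => i j.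
  rewrite (ord1 i); apply/eqP; apply: contrapT => /negP hn; apply: H; by exists j.
pose c j : R := ((x *m M1) ord0 j)%:R - ((x *m M0) ord0 j)%:R.
have cj0 : c j0 != 0 by rewrite /c subr_eq0 eqr_nat.
rewrite /almost_everywhere /=.
apply: (negligibleS _ (@Ec_negligible _ _ _ _ _ _ Hnormal Hindep _ _ cj0)).
move=> w /= Hw; apply: contrapT => nE; apply: Hw; split => [hm|]; last by [].
exfalso; apply: nE.
set A := [set (score x M (fun j => g j w))%:E | M in consistent S T].
have i1 : (ereal_inf A <= (score x M1 (fun j => g j w))%:E)%E.
  by apply: ereal_inf_lbound; exists M1.
have i0 : (ereal_inf A <= (score x M0 (fun j => g j w))%:E)%E.
  by apply: ereal_inf_lbound; exists M0.
have s1 : ((score x M1 (fun j => g j w))%:E <= ereal_sup A)%E.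
  by apply: ereal_sup_ubound; exists M1.
have s0 : ((score x M0 (fun j => g j w))%:E <= ereal_sup A)%E.
  by apply: ereal_sup_ubound; exists M0.
have hm' : ereal_inf A = ereal_sup A by exact: hm.
have e10 : score x M1 (fun j => g j w) = score x M0 (fun j => g j w).
  apply/eqP; rewrite eq_le -!lee_fin.
  by rewrite (le_trans s1) -?hm' // (le_trans s0) -?hm'.
rewrite /= /c.
under eq_bigr => j _ do rewrite mulrBl.
by rewrite sumrB; apply/eqP; rewrite subr_eq0; apply/eqP; exact: e10.
Qed.
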